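(* Let $(f,\bar f)\colon(G,P_G)\to(H,P_H)$ be a regular epimorphism in $\mathsf{PreOrdGrp}$. Then $\bar f\colon P_G\to P_H$ is a special homogeneous surjection in the category $\mathsf{Mon}$ of monoids if and only if for all $x,y\in P_G$ with $f(x)=f(y)$ one has $y-x\in P_G$ and $-x+y\in P_G$.
   Context: A preordered group is a pair $(G,P_G)$ with $G$ an additively written group (not necessarily abelian) and $P_G\subseteq G$ a submonoid closed under conjugation; a morphism $(f,\bar f)$ is a group homomorphism $f$ with $f(P_G)\subseteq P_H$, $\bar f$ its restriction to positive cones. This is $\mathsf{PreOrdGrp}$; its regular epimorphisms are the morphisms with $f$ and $\bar f$ both surjective. A split epimorphism of monoids $g\colon X\to Y$ with section $s$ and kernel $K=g^{-1}(0)$ is homogeneous if for every $y\in Y$ the maps $K\to g^{-1}(y)$, $x\mapsto x+s(y)$ and $x\mapsto s(y)+x$, are bijections. A surjective monoid homomorphism $g\colon X\to Y$ is a special homogeneous surjection if the first projection $\pi_1\colon Eq(g)\to X$ of its kernel pair $Eq(g)=\{(x,x')\in X\times X: g(x)=g(x')\}$, with section the diagonal $x\mapsto(x,x)$, is a homogeneous split epimorphism. *)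

(* Defs.v *)
(* Groups are not assumed abelian, so we use our own records. *)
From Stdlib Require Import ProofIrrelevance.
Set Implicit Arguments.

Record Group := {
  gcar :> Type;
  gadd : gcar -> gcar -> gcar;
  gopp : gcar -> gcar;
  gzero : gcar;
  gaddA : forall x y z, gadd x (gadd y z) = gadd (gadd x y) z;
  gadd0l : forall x, gadd gzero x = x;
  gadd0r : forall x, gadd x gzero = x;
  gaddNl : forall x, gadd (gopp x) x = gzero;
  gaddNr : forall x, gadd x (gopp x) = gzero }.
Arguments gadd {g}. Arguments gopp {g}. Arguments gzero {g}.

Definition is_group_hom (G H : Group) (f : G -> H) : Prop :=
  forall a b, f (gadd a b) = gadd (f a) (f b).
Arguments is_group_hom {G H}.

(* ---------- preordered groups: positive cone = conjugation-closed submonoid *)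
Record PreOrdGrp := {
  pgrp :> Group;
  pos : pgrp -> Prop;
  pos0 : pos gzero;
  posD : forall x y, pos x -> pos y -> pos (gadd x y);
  posJ : forall g x, pos x -> pos (gadd (gadd g x) (gopp g)) }.
Arguments pos {p}. Arguments posD {p x y}. Arguments pos0 {p}.

Record Monoid := {
  mcar :> Type;
  mop : mcar -> mcar -> mcar;
  munit : mcar;
  mopA : forall x y z, mop x (mop y z) = mop (mop x y) z;
  mop1l : forall x, mop munit x = x;
  mop1r : forall x, mop x munit = x }.
Arguments mop {m}. Arguments munit {m}.

Definition is_monoid_hom (X Y : Monoid) (f : X -> Y) : Prop :=
  f munit = munit /\ forall a b, f (mop a b) = mop (f a) (f b).
Arguments is_monoid_hom {X Y}.

Definition surjective (A B : Type) (f : A -> B) : Prop := forall b, exists a, f a = b.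

Lemma sig_eq_pi (A : Type) (P : A -> Prop) (a b : sig P) :
  proj1_sig a = proj1_sig b -> a = b.
Proof.
  destruct a as [a pa], b as [b pb]; simpl; intros ->.
  f_equal; apply proof_irrelevance.
Qed.

Definition pos_op (G : PreOrdGrp) (a b : {x : G | pos x}) : {x : G | pos x} :=
  exist _ (gadd (proj1_sig a) (proj1_sig b)) (posD (proj2_sig a) (proj2_sig b)).

Definition PosMonoid (G : PreOrdGrp) : Monoid.
Proof.
  refine (@Build_Monoid {x : G | pos x} (@pos_op G) (exist _ gzero (@pos0 G)) _ _ _);
  intros; apply sig_eq_pi; simpl.
  - apply gaddA.
  - apply gadd0l.
  - apply gadd0r.
Defined.

Definition fbar (G H : PreOrdGrp) (f : G -> H) (hp : forall x, pos x -> pos (f x))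
  (a : PosMonoid G) : PosMonoid H :=
  exist _ (f (proj1_sig a)) (hp _ (proj2_sig a)).

Section KernelPair.
Variables (X Y : Monoid) (g : X -> Y) (hg : @is_monoid_hom X Y g).

Definition eqg_op (a b : {p : X * X | g (fst p) = g (snd p)}) :
  {p : X * X | g (fst p) = g (snd p)}.
Proof.
  refine (exist _ (mop (fst (proj1_sig a)) (fst (proj1_sig b)),
                   mop (snd (proj1_sig a)) (snd (proj1_sig b))) _).
  destruct a as [[a1 a2] ea], b as [[b1 b2] eb]; simpl in *.
  destruct hg as [_ hm]; rewrite !hm, ea, eb; reflexivity.
Defined.

Definition eqg_unit : {p : X * X | g (fst p) = g (snd p)} :=
  exist _ (munit, munit) eq_refl.

Definition EqMonoid : Monoid.
Proof.
  refine (@Build_Monoid {p : X * X | g (fst p) = g (snd p)} eqg_op eqg_unit _ _ _);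
  intros; apply sig_eq_pi; simpl;
  (rewrite !mopA || rewrite !mop1l || rewrite !mop1r); try reflexivity;
  destruct (proj1_sig x); reflexivity.
Defined.

Definition eq_pi1 (p : EqMonoid) : X := fst (proj1_sig p).
Definition eq_diag (x : X) : EqMonoid := exist _ (x, x) eq_refl.
End KernelPair.

Definition bij_on (T : Type) (A B : T -> Prop) (h : T -> T) : Prop :=
  (forall x, A x -> B (h x)) /\
  (forall x x', A x -> A x' -> h x = h x' -> x = x') /\
  (forall z, B z -> exists x, A x /\ h x = z).

Definition homogeneous_split_epi (X Y : Monoid) (g : X -> Y) (s : Y -> X) : Prop :=
  is_monoid_hom g /\ is_monoid_hom s /\ (forall y, g (s y) = y) /\
  forall y : Y,
    bij_on (fun x => g x = munit) (fun x => g x = y) (fun x => mop x (s y)) /\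
    bij_on (fun x => g x = munit) (fun x => g x = y) (fun x => mop (s y) x).

Definition special_homogeneous_surjection (X Y : Monoid) (g : X -> Y) : Prop :=
  exists hg : is_monoid_hom g,
    surjective g /\
    @homogeneous_split_epi (EqMonoid hg) X (@eq_pi1 X Y g hg) (@eq_diag X Y g hg).
Arguments fbar {G H} f hp a.
Arguments surjective {A B}.
Arguments homogeneous_split_epi {X Y}.
Arguments special_homogeneous_surjection {X Y}.

(* Main.v *)
Require Import Defs.

Lemma gcancel_r (G : Group) (a b c : G) : gadd a c = gadd b c -> a = b.
Proof.
  intro H. rewrite <- (gadd0r _ a), <- (gadd0r _ b), <- (gaddNr _ c), !gaddA, H. reflexivity.
Qed.

Lemma gcancel_l (G : Group) (a b c : G) : gadd c a = gadd c b -> a = b.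
Proof.
  intro H. rewrite <- (gadd0l _ a), <- (gadd0l _ b), <- (gaddNl _ c), <- !gaddA, H. reflexivity.
Qed.

Lemma hom0 (G H : Group) (f : G -> H) : is_group_hom f -> f gzero = gzero.
Proof.
  intro hf. apply (@gcancel_r H _ _ (f gzero)). rewrite <- hf, gadd0l, gadd0l. reflexivity.
Qed.

Lemma homN (G H : Group) (f : G -> H) : is_group_hom f -> forall x, f (gopp x) = gopp (f x).
Proof.
  intros hf x. apply (@gcancel_r H _ _ (f x)). rewrite <- hf, gaddNl, gaddNl. apply hom0; auto.
Qed.

Theorem lemma6p2 (G H : PreOrdGrp) (f : G -> H)
  (hf : is_group_hom f) (hp : forall x : G, pos x -> pos (f x)) :
  (* (f, fbar) is a regular epimorphism in PreOrdGrp *)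
  surjective f -> surjective (fbar f hp) ->
  (special_homogeneous_surjection (fbar f hp) <->
   forall x y : G, pos x -> pos y -> f x = f y ->
     pos (gadd y (gopp x)) /\ pos (gadd (gopp x) y)).
Proof.
  intros sf sfb. split.
  - intros [hg [_ [_ [_ [_ hom]]]]] x y px py fxy.
    set (x' := exist _ x px : PosMonoid G).
    set (y' := exist _ y py : PosMonoid G).
    assert (e : fbar f hp (fst (x', y')) = fbar f hp (snd (x', y'))).
    { apply sig_eq_pi; exact fxy. }
    set (z := exist _ (x', y') e : EqMonoid hg).
    destruct (hom x') as [[_ [_ S1]] [_ [_ S2]]].
    split.
    + destruct (S1 z eq_refl) as [[[a b] ea] [Ha Hz]].
      unfold eq_pi1 in Ha; cbn in Ha. subst a.
      apply (f_equal (fun q => proj1_sig (snd (proj1_sig q)))) in Hz. cbn in Hz.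
      destruct b as [b pb]; cbn in Hz.
      replace (gadd y (gopp x)) with b; auto.
      rewrite <- Hz, <- gaddA, gaddNr, gadd0r. reflexivity.
    + destruct (S2 z eq_refl) as [[[a b] ea] [Ha Hz]].
      unfold eq_pi1 in Ha; cbn in Ha. subst a.
      apply (f_equal (fun q => proj1_sig (snd (proj1_sig q)))) in Hz. cbn in Hz.
      destruct b as [b pb]; cbn in Hz.
      replace (gadd (gopp x) y) with b; auto.
      rewrite <- Hz, gaddA, gaddNl, gadd0l. reflexivity.
  - intros Hyp.
    assert (hg : is_monoid_hom (fbar f hp)).
    { split.
      - apply sig_eq_pi; cbn. apply hom0; auto.
      - intros a b; apply sig_eq_pi; cbn. apply hf. }
    exists hg. split; [exact sfb|].
    split; [split; reflexivity|].
    split; [split; [apply sig_eq_pi; reflexivity| intros; apply sig_eq_pi; reflexivity]|].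
    split; [reflexivity|].
    intros [y py]. split.
    + split; [|split].
      * intros [[a b] e] Ha. unfold eq_pi1 in *; cbn in *. subst a.
        apply sig_eq_pi; cbn. apply gadd0l.
      * intros [[a b] e] [[a' b'] e'] Ha Ha' Hz. unfold eq_pi1 in *; cbn in *. subst a a'.
        apply (f_equal (fun q => proj1_sig (snd (proj1_sig q)))) in Hz. cbn in Hz.
        apply gcancel_r in Hz.
        apply sig_eq_pi; cbn. f_equal. apply sig_eq_pi; exact Hz.
      * intros [[[a pa] [c pc]] e] Hz. unfold eq_pi1 in *; cbn in *.
        apply (f_equal (@proj1_sig _ _)) in Hz. cbn in Hz. subst a.
        pose proof (f_equal (@proj1_sig _ _) e) as e0. cbn in e0.
        destruct (Hyp y c py pc e0) as [P1 P2].
        unshelve eexists (exist _ (exist _ gzero pos0, exist _ (gadd c (gopp y)) P1) _).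
        { apply sig_eq_pi; cbn. rewrite hf, homN, <- e0, gaddNr; auto. apply hom0; auto. }
        split; [reflexivity|].
        apply sig_eq_pi; cbn. f_equal; apply sig_eq_pi; cbn.
        -- apply gadd0l.
        -- rewrite <- gaddA, gaddNl, gadd0r. reflexivity.
    + split; [|split].
      * intros [[a b] e] Ha. unfold eq_pi1 in *; cbn in *. subst a.
        apply sig_eq_pi; cbn. apply gadd0r.
      * intros [[a b] e] [[a' b'] e'] Ha Ha' Hz. unfold eq_pi1 in *; cbn in *. subst a a'.
        apply (f_equal (fun q => proj1_sig (snd (proj1_sig q)))) in Hz. cbn in Hz.
        apply gcancel_l in Hz.
        apply sig_eq_pi; cbn. f_equal. apply sig_eq_pi; exact Hz.
      * intros [[[a pa] [c pc]] e] Hz. unfold eq_pi1 in *; cbn in *.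
        apply (f_equal (@proj1_sig _ _)) in Hz. cbn in Hz. subst a.
        pose proof (f_equal (@proj1_sig _ _) e) as e0. cbn in e0.
        destruct (Hyp y c py pc e0) as [P1 P2].
        unshelve eexists (exist _ (exist _ gzero pos0, exist _ (gadd (gopp y) c) P2) _).
        { apply sig_eq_pi; cbn. rewrite hf, homN, <- e0, gaddNl; auto. apply hom0; auto. }
        split; [reflexivity|].
        apply sig_eq_pi; cbn. f_equal; apply sig_eq_pi; cbn.
        -- apply gadd0r.
        -- rewrite gaddA, gaddNr, gadd0l. reflexivity.
Qed.
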